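(* Let $M=M(S^2;\frac{q_1}{p_1},\frac{q_2}{p_2},\frac{q_3}{p_3})$ with $e(M)\neq0$. Suppose that for some $\{i,j,k\}=\{1,2,3\}$ we have $d:=\gcd(p_i,p_j)>2$ and $s:=\gcd(p_ip_j/d,\,p_k)>2$. If $d\neq4$ or $s\neq4$, then $x_M>0$ (for all $q_1,q_2,q_3$ with $q_i$ coprime to $p_i$).
   Context: $M(S^2;\frac{q_1}{p_1},\frac{q_2}{p_2},\frac{q_3}{p_3})$ ($(p_i,q_i)$ coprime, $p_i\ge1$) is the closed Seifert manifold obtained from $S_{0,3}\times S^1$ by gluing solid tori whose meridians are $p_ic_i+q_ih_i$; $e(M)=\sum_iq_i/p_i$; $\pi_1(M)=\langle c_1,c_2,c_3,h\mid [c_i,h]=1=c_i^{p_i}h^{q_i},\ c_1c_2c_3=1\rangle$. An abelian character is the trace of a diagonal representation $\pi_1(M)\to\mathrm{SL}_2(\mathbb{C})$; it is exceptional if it is the trace of a representation $\rho$ with $\rho(h)=\pm I$ and $\rho(c_i)\neq\pm I$ for $i=1,2,3$; $x_M$ is the number of exceptional abelian characters. *)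

(* Defs.v *)
From HB Require Import structures.
From mathcomp Require Import all_boot all_order all_algebra.
Set Implicit Arguments. Unset Strict Implicit. Unset Printing Implicit Defensive.
Import Order.TTheory GRing.Theory Num.Theory.
Local Open Scope ring_scope.

(* Generators of pi_1(M): [Some i] is c_(i+1) (i : 'I_3), [None] is h. *)
Definition gen := option 'I_3.

(* Words in the generators and their inverses: (x, true) stands for x^-1.
   Every element of pi_1(M) is represented by such a word. *)
Definition word := seq (gen * bool).

Section Reps.
Variable C : numClosedFieldType.

Definition eval_word (g : gen -> 'M[C]_2) (w : word) : 'M[C]_2 :=
  \prod_(x <- w) (if x.2 then (g x.1)^-1 else g x.1).

(* g defines a representation pi_1(M) -> SL_2(C), where
   pi_1(M) = < c1,c2,c3,h | [c_i,h]=1 = c_i^{p_i} h^{q_i}, c1 c2 c3 = 1 >. *)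
Definition is_SL2_rep (p : 'I_3 -> nat) (q : 'I_3 -> int) (g : gen -> 'M[C]_2) : Prop :=
  (forall x, \det (g x) = 1) /\
  (forall i : 'I_3, g (Some i) * g None = g None * g (Some i)) /\
  (forall i : 'I_3, (g (Some i)) ^+ (p i) * (g None) ^ (q i) = 1) /\
  g (Some 0) * g (Some 1) * g (Some 2) = 1.

Definition is_diagonal_rep p q (g : gen -> 'M[C]_2) : Prop :=
  is_SL2_rep p q g /\ forall x, is_diag_mx (g x).

Definition is_trace_of (g : gen -> 'M[C]_2) (chi : word -> C) : Prop :=
  forall w, chi w = \tr (eval_word g w).

Definition pmI (A : 'M[C]_2) : bool := (A == 1%:M) || (A == (-1)%:M).

Definition abelian_character p q (chi : word -> C) : Prop :=
  exists g, is_diagonal_rep p q g /\ is_trace_of g chi.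

Definition exceptional_character p q (chi : word -> C) : Prop :=
  exists g, [/\ is_SL2_rep p q g, is_trace_of g chi, pmI (g None)
            & forall i : 'I_3, ~~ pmI (g (Some i))].

Definition xM_pos p q : Prop :=
  exists chi : word -> C, abelian_character p q chi /\ exceptional_character p q chi.
End Reps.

Definition euler_number (p : 'I_3 -> nat) (q : 'I_3 -> int) : rat :=
  \sum_(i < 3) (q i)%:~R / (p i)%:R.

(* Main.v *)
Require Import Defs.
From HB Require Import structures.
From mathcomp Require Import all_boot all_order all_algebra all_algebra.
From mathcomp Require Import cyclic separable.
Import Order.TTheory GRing.Theory Num.Theory.
Local Open Scope ring_scope.
Lemma separable_Xn_sub_1' (R : idomainType) n :
  n%:R != 0 :> R -> @separable_poly R ('X^n - 1).
Proof.
case: n => [/eqP// | n nz_n]; rewrite unlock linearB /= derivC subr0.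
rewrite derivXn -scaler_nat coprimepZr //= exprS -scaleN1r coprimep_sym.
by rewrite coprimep_addl_mul coprimepZr ?coprimep1 // (signr_eq0 _ 1).
Qed.
Lemma prim_exists (C : numClosedFieldType) n : (n > 0)%N -> exists z : C, n.-primitive_root z.
Proof.
pose p : {poly C} := 'X^n - 1; have [r Dp] := closed_field_poly_normal p.
move=> n_gt0; rewrite (monicP _) ?monicXnsubC // scale1r in Dp.
have rn1: all n.-unity_root r by apply/allP=> z; rewrite -root_prod_XsubC -Dp.
have sz_r: (n < (size r).+1)%N.
  by rewrite -(size_prod_XsubC r id) -Dp size_XnsubC.
have [|z] := hasP (has_prim_root n_gt0 rn1 _ sz_r); last by exists z.
by rewrite -separable_prod_XsubC -Dp separable_Xn_sub_1' // pnatr_eq0 -lt0n.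
Qed.
From mathcomp Require Import ring.

Lemma third (l a b c : 'I_3) : a != b -> b != c -> a != c -> l != a -> l != b -> l = c.
Proof.
by case: l a b c => [[|[|[|//]]] ?] [[|[|[|//]]] ?] [[|[|[|//]]] ?] [[|[|[|//]]] ?] //= *;
  apply/val_inj.
Qed.

Lemma dvd4 n : (2 < n)%N -> (n %| 4)%N -> n = 4%N.
Proof.
move=> h1 h2; have h3 := dvdn_leq (isT : (0 < 4)%N) h2; move: h1 h2 h3.
by case: n => [|[|[|[|[|n]]]]].
Qed.

Section S.
Variable C : numClosedFieldType.

Definition Dm (l : C) : 'M[C]_2 := diag_mx (\row_(t < 2) (if t == 0 then l else l^-1)).

Lemma DmM a b : Dm a * Dm b = Dm (a * b).
Proof.
change (Dm a *m Dm b = Dm (a * b)); rewrite mulmx_diag /Dm; congr diag_mx.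
by apply/rowP => t; rewrite !mxE; case: ifP => _ //; rewrite invfM.
Qed.

Lemma Dm1 : Dm 1 = 1.
Proof.
apply/matrixP => r t; rewrite !mxE.
by case: r t => [[|[|//]] ?] [[|[|//]] ?] //=; rewrite ?invr1.
Qed.

Lemma DmX a n : Dm a ^+ n = Dm (a ^+ n).
Proof. by elim: n => [|n IH]; rewrite ?expr0 ?Dm1 // !exprS IH DmM. Qed.

Lemma Dm_det a : a != 0 -> \det (Dm a) = 1.
Proof. by move=> ha; rewrite det_diag !big_ord_recr big_ord0 !mxE /=; rewrite mul1r mulfV. Qed.

Lemma Dm_pmI a : a ^+ 2 != 1 -> ~~ pmI (Dm a).
Proof.
move=> ha; rewrite /pmI; apply/norP; split; apply/eqP => H;
  have := congr1 (fun M : 'M[C]_2 => M 0 0) H; rewrite !mxE /= mulr1n => Ha;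
  by move: ha; rewrite Ha ?sqrrN expr1n eqxx.
Qed.

End S.
Arguments Dm {C}.
Arguments DmM {C}.
Arguments Dm1 {C}.
Arguments DmX {C}.
Arguments Dm_det {C}.
Arguments Dm_pmI {C}.

Lemma nz_of_root {C : numClosedFieldType} {x : C} {n} : x ^+ n = 1 -> (0 < n)%N -> x != 0.
Proof.
move=> h hn; apply/eqP=> x0; move: h; rewrite x0 expr0n eqn0Ngt hn /= => /eqP.
by rewrite eq_sym oner_eq0.
Qed.

Lemma prodlem (C : numClosedFieldType) (a b c : 'I_3) (z w : C) :
  z != 0 -> w != 0 -> a != b -> b != c -> a != c ->
  let lam := fun l : 'I_3 => if l == a then z * w else if l == b then z^-1 else w^-1 in
  lam 0 * lam 1 * lam 2 = 1.
Proof.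
move=> z0 w0.
case: a => [[|[|[|//]]] ?].
all: case: b => [[|[|[|//]]] ?].
all: case: c => [[|[|[|//]]] ?].
all: move=> //= _ _ _.
all: by field; rewrite z0 w0.
Qed.

Lemma core (C : numClosedFieldType) (p : 'I_3 -> nat) (q : 'I_3 -> int)
    (hp : forall l, (0 < p l)%N) (a b c : 'I_3) :
  a != b -> b != c -> a != c -> forall z w : C,
  z ^+ p a = 1 -> z ^+ p b = 1 -> w ^+ p a = 1 -> w ^+ p c = 1 ->
  z ^+ 2 != 1 -> w ^+ 2 != 1 -> (z * w) ^+ 2 != 1 -> xM_pos C p q.
Proof.
move=> hab hbc hac z w za zb wa wc z2 w2 zw2.
have z0 : z != 0.
  exact: (nz_of_root za (hp a)).
have w0 : w != 0.
  exact: (nz_of_root wa (hp a)).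
pose lam := fun l : 'I_3 => if l == a then z * w else if l == b then z^-1 else w^-1.
pose g := fun x : gen => if x is Some l then Dm (lam l) else (1 : 'M[C]_2).
have lamp : forall l, lam l ^+ p l = 1.
  move=> l; rewrite /lam; case: ifP => [/eqP -> | /negbT la]; first by rewrite exprMn za wa mulr1.
  case: ifP => [/eqP -> | /negbT lb]; first by rewrite exprVn zb invr1.
  by rewrite (@third l a b c hab hbc hac la lb) exprVn wc invr1.
have lam0 : forall l, lam l != 0.
  by move=> l; exact: (nz_of_root (lamp l) (hp l)).
have lam2 : forall l, lam l ^+ 2 != 1.
  move=> l; rewrite /lam; case: ifP => // _; case: ifP => _; by rewrite exprVn invr_eq1.
have prod : lam 0 * lam 1 * lam 2 = 1.
  exact: (@prodlem C a b c z w z0 w0 hab hbc hac).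
have rep : is_SL2_rep p q g.
  split; [|split; [|split]].
  - by case => [l|] /=; [exact: Dm_det | exact: det1].
  - by move=> l /=; rewrite mulr1 mul1r.
  - by move=> l /=; rewrite exp1rz mulr1 DmX lamp Dm1.
  - by rewrite /= !DmM prod Dm1.
exists (fun w => \tr (eval_word g w)); split.
- exists g; split => //; split => // [[l|]] /=; [exact: diag_mx_is_diag | exact: (@scalar_mx_is_diag C 2 1)].
- exists g; split => //; first by rewrite /pmI /= eqxx.
  by move=> l /=; apply: Dm_pmI.
Qed.

Lemma gen_case (C : numClosedFieldType) (p : 'I_3 -> nat) (q : 'I_3 -> int)
    (hp : forall l, (0 < p l)%N) (a b c : 'I_3) :
  a != b -> b != c -> a != c ->
  (2 < gcdn (p a) (p b))%N -> (2 < gcdn (p a) (p c))%N ->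
  (gcdn (p a) (p b) != 4%N) || (gcdn (p a) (p c) != 4%N) -> xM_pos C p q.
Proof.
move=> hab hbc hac hD hX h4.
set D := gcdn (p a) (p b) in hD h4; set X := gcdn (p a) (p c) in hX h4.
have [z hz] := prim_exists C _ (ltnW (ltnW hD)).
have [y hy] := prim_exists C _ (ltnW (ltnW hX)).
have ex (u : C) n m : n.-primitive_root u -> (n %| m)%N -> u ^+ m = 1.
  by move=> hu hnm; apply/eqP; rewrite -(prim_order_dvd hu).
have za : z ^+ p a = 1 by apply: (ex _ _ _ hz); exact: dvdn_gcdl.
have zb : z ^+ p b = 1 by apply: (ex _ _ _ hz); exact: dvdn_gcdr.
have ya : y ^+ p a = 1 by apply: (ex _ _ _ hy); exact: dvdn_gcdl.
have yc : y ^+ p c = 1 by apply: (ex _ _ _ hy); exact: dvdn_gcdr.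
have nd (u : C) n m : n.-primitive_root u -> (2 < n)%N -> (m <= 2)%N -> (0 < m)%N -> u ^+ m != 1.
  move=> hu hn hm hm0; rewrite -(prim_order_dvd hu); apply/negP => /(dvdn_leq hm0).
  by move=> h; move: (leq_trans h hm); rewrite leqNgt hn.
have z2 : z ^+ 2 != 1 by exact: (nd _ _ _ hz hD).
have y2 : y ^+ 2 != 1 by exact: (nd _ _ _ hy hX).
have y0 : y != 0 by exact: (nz_of_root ya (hp a)).
have z0 : z != 0 by exact: (nz_of_root za (hp a)).
have [zy2|zy2] := boolP ((z * y) ^+ 2 == 1); last first.
  exact: (@core C p q hp a b c hab hbc hac z y za zb ya yc z2 y2 zy2).
have [zy2'|zy2'] := boolP ((z * y^-1) ^+ 2 == 1); last first.
  apply: (@core C p q hp a b c hab hbc hac z y^-1 za zb _ _ z2 _ zy2'); by rewrite exprVn ?ya ?yc ?invr1 // invr_eq1.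
exfalso.
have e1 : z ^+ 4 = (z * y) ^+ 2 * (z * y^-1) ^+ 2 by field.
have e2 : y ^+ 4 = (z * y) ^+ 2 / (z * y^-1) ^+ 2 by field; rewrite z0 y0.
move: e1 e2; rewrite (eqP zy2) (eqP zy2') mulr1 invr1 mulr1 => /eqP e1 /eqP e2.
move: e1 e2; rewrite -(prim_order_dvd hz) -(prim_order_dvd hy) => /(@dvd4 _ hD) e1 /(@dvd4 _ hX) e2.
by move: h4; rewrite e1 e2.
Qed.

Theorem proposition5p6 (C : numClosedFieldType)
    (p : 'I_3 -> nat) (q : 'I_3 -> int)
    (hp : forall l, (0 < p l)%N)
    (hcop : forall l, coprimez (p l)%:Z (q l))
    (he : euler_number p q != 0)
    (i j k : 'I_3) (hij : i != j) (hjk : j != k) (hik : i != k) :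
  let d := gcdn (p i) (p j) in
  let s := gcdn (p i * p j %/ d) (p k) in
  (2 < d)%N -> (2 < s)%N -> (d != 4%N) || (s != 4%N) ->
  xM_pos C p q.
Proof.
move=> d s hd hs hds.
have hsl : s = lcmn (gcdn (p i) (p k)) (gcdn (p j) (p k)) by exact: Order.NatDvd.meetUl.
set e := gcdn (p i) (p k) in hsl; set f := gcdn (p j) (p k) in hsl.
have [E|E] := boolP ((2 < e)%N && ((d != 4%N) || (e != 4%N))).
  by case/andP: E => E1 E2; exact: (@gen_case C p q hp i j k hij hjk hik hd E1 E2).
have [F|F] := boolP ((2 < f)%N && ((d != 4%N) || (f != 4%N))).
  case/andP: F => F1 F2; have hd' : gcdn (p j) (p i) = d by rewrite gcdnC.
  apply: (@gen_case C p q hp j i k _ hik hjk); rewrite ?hd' //.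
  by rewrite eq_sym.
have e0 : (0 < e)%N by rewrite gcdn_gt0 hp.
have f0 : (0 < f)%N by rewrite gcdn_gt0 hp.
have sm (n : nat) : (0 < n)%N -> ~~ ((2 < n)%N && ((d != 4%N) || (n != 4%N))) ->
   (n %| 4)%N && ((d != 4%N) ==> (n %| 2)%N).
  move=> n0; case: (ltnP 2 n) => /= hn.
    by rewrite negb_or !negbK => /andP[/eqP -> /eqP ->].
  by move=> _; move: n0 hn; case: n => [|[|[|]]] //= _ _; rewrite implybT.
have /andP[e4 e2] := sm e e0 E.
have /andP[f4 f2] := sm f f0 F.
have s4 : s = 4%N by apply: dvd4 => //; rewrite hsl dvdn_lcm e4 f4.
move: hds; rewrite s4 eqxx orbF => hd4.
move: e2 f2; rewrite hd4 /= => e2 f2.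
have : (s %| 2)%N by rewrite hsl dvdn_lcm e2 f2.
by rewrite s4.
Qed.
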